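(* Let $G$ be a finite simple graph with at least one edge, and let $\lambda_1$ be the smallest non-zero eigenvalue of its Kirchhoff matrix $K$. Then $\lambda_1\geq 1/(\tau(G)-1)$.
   Context: $K=D-A$ is the Kirchhoff matrix (degree matrix minus adjacency matrix) of $G$. The tree-forest ratio is $\tau(G)={\rm det}(1+K)/{\rm Det}(K)=\prod_{\lambda\neq0}(1+1/\lambda)$, the product over the non-zero eigenvalues of $K$ with multiplicity (${\rm Det}$ denotes the pseudo-determinant, the product of the non-zero eigenvalues). *)

(* Defs.v *)
From HB Require Import structures.
From mathcomp Require Import all_boot all_order all_algebra.
From mathcomp Require Import polyrcf.
Set Implicit Arguments. Unset Strict Implicit. Unset Printing Implicit Defensive.
Import Order.TTheory GRing.Theory Num.Theory.
Local Open Scope ring_scope.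

Definition simple_graph (n : nat) (e : rel 'I_n) : Prop :=
  symmetric e /\ irreflexive e.

Definition kirchhoff (R : nzRingType) (n : nat) (e : rel 'I_n) : 'M[R]_n :=
  \matrix_(i, j) ((if i == j then (#|[set k | e i k]|)%:R else 0)
                  - (e i j)%:R).

(* Pseudo-determinant: product of the non-zero eigenvalues of A, counted with
   (algebraic) multiplicity, i.e. of the non-zero roots of the characteristic
   polynomial.  (For the symmetric Kirchhoff matrix the characteristic
   polynomial splits over the real closed field R.) *)
Definition pdet (R : rcfType) (n : nat) (A : 'M[R]_n) : R :=
  \prod_(x <- rootsR (char_poly A) | x != 0) x ^+ mup x (char_poly A).

Definition tau (R : rcfType) (n : nat) (e : rel 'I_n) : R :=
  \det (1%:M + kirchhoff R e) / pdet (kirchhoff R e).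

(* Main.v *)
Require Import Defs.
From HB Require Import structures.
From mathcomp Require Import all_boot all_order all_algebra.
From mathcomp Require Import polyrcf complex spectral sesquilinear.
From mathcomp Require Import ring lra.
Import Order.TTheory GRing.Theory Num.Theory.
Local Open Scope ring_scope.

Lemma char_poly_similar (F : fieldType) n (P D : 'M[F]_n) : P \in unitmx ->
  char_poly (invmx P *m D *m P) = char_poly D.
Proof.
move=> Pu.
have PP : P *m (invmx P *m D *m P) = D *m P by rewrite !mulmxA mulmxV // mul1mx.
have E : map_mx polyC P *m char_poly_mx (invmx P *m D *m P)
         = char_poly_mx D *m map_mx polyC P.
  rewrite /char_poly_mx mulmxBr mulmxBl -map_mxM PP map_mxM.
  by rewrite scalar_mxC.
move/(congr1 determinant): E; rewrite !det_mulmx [RHS]mulrC => /mulfI; apply.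
by rewrite det_map_mx polyC_eq0 -unitfE -unitmxE.
Qed.

Lemma char_poly_split (R : rcfType) n (A : 'M[R]_n) : A^T = A ->
  exists s : seq R, char_poly A = \prod_(x <- s) ('X - x%:P).
Proof.
move=> symA.
pose AC := map_mx (real_complex R) A.
have Herm : AC \is hermsymmx.
  apply: realsym_hermsym.
    apply/is_hermitianmxP; rewrite expr0 scale1r.
    by rewrite map_mx_id // /AC map_trmx symA.
  by apply/mxOverP => i j; rewrite mxE complex_real.
have /orthomx_spectralP Adec := hermitian_normalmx Herm.
have dreal := hermitian_spectral_diag_real Herm.
exists [seq complex.Re (spectral_diag AC 0 i : R[i]) | i <- enum 'I_n].
apply: (@map_poly_inj _ _ (real_complex R)).
rewrite map_char_poly -/AC {1}Adec char_poly_similar ?spectral_unit //.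
rewrite char_poly_trig ?diag_mx_is_trig // rmorph_prod big_map big_enum /=.
apply: eq_bigr => i _; rewrite map_polyXsubC mxE eqxx mulr1n.
by rewrite /= RRe_real // (mxOverP dreal).
Qed.

Lemma horner_char_poly (R : comNzRingType) n (A : 'M[R]_n) a :
  (char_poly A).[a] = \det (a%:M - A).
Proof.
rewrite /char_poly -horner_evalE -det_map_mx; congr (\det _).
by apply/matrixP => i j; rewrite !mxE /= horner_evalE hornerD hornerN hornerMn hornerX hornerC.
Qed.

Lemma iterop_mul (R : comNzRingType) k (x : R) : iterop k *%R x 1 = x ^+ k.
Proof. by case: k => // k; rewrite iteropS; elim: k => //= k ->; rewrite exprS. Qed.

Lemma horner_prod_m1 (R : comNzRingType) (s : seq R) :
  (\prod_(x <- s) ('X - x%:P)).[-1] = (-1) ^+ size s * \prod_(x <- s) (1 + x).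
Proof.
elim: s => [|y s IH]; first by rewrite !big_nil hornerC expr0 mul1r.
rewrite !big_cons hornerM IH hornerXsubC /= exprS.
ring.
Qed.

Section Main.
Variables (R : rcfType) (n : nat) (e : rel 'I_n).
Hypothesis hs : symmetric e.
Local Notation K := (kirchhoff R e).

Lemma K_sym : K^T = K.
Proof.
apply/matrixP => i j; rewrite !mxE eq_sym.
by case: eqP => [->|_] //; rewrite hs.
Qed.

Lemma deg_sum i : (#|[set k | e i k]|%:R : R) = \sum_k (e i k)%:R.
Proof.
rewrite -sum1_card natr_sum big_mkcond /=; apply: eq_bigr => k _.
by rewrite inE; case: (e i k).
Qed.

Lemma vK_entry (v : 'rV[R]_n) j :
  (v *m K) 0 j = \sum_i (e i j)%:R * (v 0 j - v 0 i).
Proof.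
rewrite mxE.
under eq_bigr => i _ do rewrite mxE mulrBr.
rewrite sumrB (bigD1 j) //= eqxx big1 => [|i /negbTE ->]; last by rewrite mulr0.
rewrite addr0 deg_sum mulr_sumr -sumrB; apply: eq_bigr => i _.
by rewrite hs mulrBr mulrC [v 0 i * _]mulrC.
Qed.

Lemma eig_nonneg x : eigenvalue K x -> 0 <= x.
Proof.
case/eigenvalueP => v vK vnz.
pose S := \sum_j \sum_i (e i j)%:R * v 0 j * (v 0 j - v 0 i).
have h1 : x * \sum_j v 0 j ^+ 2 = S.
  rewrite mulr_sumr; apply: eq_bigr => j _.
  have := congr1 (fun M : 'rV_n => M 0 j) vK; rewrite /= vK_entry mxE => E.
  by rewrite expr2 mulrA -E mulr_suml; apply: eq_bigr => i _; rewrite mulrAC.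
have h2 : S = \sum_j \sum_i (e i j)%:R * v 0 i * (v 0 i - v 0 j).
  rewrite /S exchange_big /=; apply: eq_bigr => j _; apply: eq_bigr => i _.
  by rewrite hs.
have h3 : (x * \sum_j v 0 j ^+ 2) *+ 2 = \sum_j \sum_i (e i j)%:R * (v 0 j - v 0 i) ^+ 2.
  rewrite mulr2n h1 {1}h2 /S -big_split /=; apply: eq_bigr => j _.
  rewrite -big_split /=; apply: eq_bigr => i _; rewrite expr2; ring.
have hpos : 0 < \sum_j v 0 j ^+ 2.
  have [j vj] : exists j, v 0 j != 0.
    apply/existsP; apply: contraNT vnz; rewrite negb_exists => /forallP H.
    by apply/eqP/rowP => j; rewrite mxE; apply/eqP; have := H j; rewrite negbK.
  have a : 0 <= \sum_(k < n | k != j) v 0 k ^+ 2.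
    by apply: sumr_ge0 => k _; exact: sqr_ge0.
  have b : 0 < v 0 j ^+ 2 by rewrite exprn_even_gt0.
  rewrite (bigD1 j) //=; lra.
have : 0 <= (x * \sum_j v 0 j ^+ 2) *+ 2.
  rewrite h3; apply: sumr_ge0 => j _; apply: sumr_ge0 => i _.
  by rewrite mulr_ge0 ?ler0n ?sqr_ge0.
by rewrite pmulrn_lge0 // pmulr_lge0.
Qed.

End Main.

Lemma tau_bound (R : realFieldType) (s : seq R) (l : R) :
  (forall x, x \in s -> 0 <= x) -> l \in s -> l != 0 ->
  1 + 1 / l <= (\prod_(x <- s) (1 + x)) / (\prod_(x <- s | x != 0) x).
Proof.
pose g (x : R) := if x == 0 then 1 else (1 + x) / x.
have Q : forall s : seq R, (\prod_(x <- s) (1 + x)) / (\prod_(x <- s | x != 0) x)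
                 = \prod_(x <- s) g x.
  elim => [|y t IH]; first by rewrite !big_nil divr1.
  rewrite !big_cons -IH /g; case: eqP => [->|/eqP y0] /=.
    by rewrite addr0 !mul1r.
  by rewrite mulf_div.
have g1 x : 0 <= x -> 1 <= g x.
  rewrite /g; case: eqP => [_|/eqP x0] // xge0.
  have xp : 0 < x by rewrite lt0r x0.
  by rewrite ler_pdivlMr // mul1r lerDr.
move=> hs ls l0; rewrite Q.
have gl : g l = 1 + 1 / l by rewrite /g (negbTE l0) mulrDl divff // addrC.
have gall : forall t : seq R, (forall x, x \in t -> 0 <= x) -> 1 <= \prod_(x <- t) g x.
  elim => [|y t IH] ht; first by rewrite big_nil.
  rewrite big_cons; have gy := g1 y (ht y (mem_head _ _)).
  have gt := IH (fun x xt => ht x (@mem_behead _ (y :: t) x xt)).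
  by have := ler_pM ler01 ler01 gy gt; rewrite mulr1.
elim: s hs ls => [|y t IH] ht //; rewrite in_cons big_cons => /orP[/eqP ly|lt].
  rewrite ly in gl *.
  have gl1 := g1 y (ht y (mem_head _ _)).
  have gt := gall t (fun x xt => ht x (@mem_behead _ (y :: t) x xt)).
  by rewrite -gl; have := ler_pM (le_trans ler01 gl1) ler01 (lexx _) gt; rewrite mulr1.
have gy := g1 y (ht y (mem_head _ _)).
have IH' := IH (fun x xt => ht x (@mem_behead _ (y :: t) x xt)) lt.
have h0 : 0 <= 1 / l by rewrite divr_ge0 // ht // in_cons lt orbT.
have h1 : 0 <= 1 + 1 / l by lra.
by have := ler_pM ler01 h1 gy IH'; rewrite mul1r.
Qed.

Theorem mainTheorem4 (R : rcfType) (n : nat) (e : rel 'I_n)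
  (Hg : simple_graph e) (Hedge : exists i j, e i j)
  (l1 : R)
  (Hl1 : eigenvalue (kirchhoff R e) l1) (Hl1nz : l1 != 0)
  (Hl1min : forall mu : R, eigenvalue (kirchhoff R e) mu -> mu != 0 -> l1 <= mu) :
  1 / (tau R e - 1) <= l1.
Proof.
case: Hg => hs _.
have [s hp] := @char_poly_split R n _ (@K_sym R n e hs).
have snn : forall x, x \in s -> 0 <= x.
  move=> x xs; apply: (@eig_nonneg R n e hs).
  by rewrite eigenvalue_root_char hp root_prod_XsubC.
have l1s : l1 \in s by rewrite -root_prod_XsubC -hp -eigenvalue_root_char.
have l1pos : 0 < l1 by rewrite lt0r Hl1nz (snn _ l1s).
have hdet : \det (1%:M + kirchhoff R e) = \prod_(x <- s) (1 + x).
  have sz : size s = n.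
    by have := size_char_poly (kirchhoff R e); rewrite hp size_prod_XsubC; case.
  have := @horner_char_poly _ _ (kirchhoff R e) (-1); rewrite hp horner_prod_m1 sz.
  rewrite raddfN /= -opprD -scaleN1r detZ => /mulfI E; rewrite E //.
  by rewrite expf_neq0 // oppr_eq0 oner_eq0.
have hpdet : pdet (kirchhoff R e) = \prod_(x <- s | x != 0) x.
  rewrite /pdet hp.
  have p0 : \prod_(x <- s) ('X - x%:P) != 0 := monic_neq0 (monic_prod_XsubC _ _ _).
  rewrite (@perm_big _ _ _ _ _ (undup s)); last first.
    apply: uniq_perm; first exact: lt_sorted_uniq (sorted_roots _ _ _).
      exact: undup_uniq.
    move=> x; rewrite mem_undup -[x \in s]root_prod_XsubC -(roots_on_rootsR p0 x).
    by rewrite in_itv.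
  under eq_bigr => x _ do rewrite mu_prod_XsubC -iterop_mul.
  by rewrite big_undup_iterop_count.
rewrite /tau hdet hpdet.
have := @tau_bound _ _ _ snn l1s Hl1nz.
set T := (\prod_(x <- s) (1 + x)) / _ => hT.
have h0 : 0 < 1 / l1 by rewrite divr_gt0.
have hT1 : 0 < T - 1 by lra.
rewrite ler_pdivrMr //.
have : l1 * (1 / l1) <= l1 * (T - 1) by rewrite ler_pM2l //; lra.
by rewrite mul1r divff.
Qed.
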